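(* Let $S$ be a semigroup and $a\in S$ an idempotent with $aSa\subseteq\operatorname{Reg}(S)$; put $P=\{x\in Sa: x\,\mathscr L\,ax\}$ (a regular subsemigroup of $Sa$) and $\phi:P\to aSa$, $x\mapsto ax$. Let $x\in P$, and let $r$ be the number of $\mathscr R^P$-classes contained in $\widehat R^a_x$. Then: (i) the restriction of $\phi$ to $H^P_x$ is a bijection $H^P_x\to H^{aSa}_{ax}$; (ii) $H^P_x$ is a group if and only if $H^{aSa}_{ax}$ is a group, in which case these groups are isomorphic; (iii) if $H^P_x$ is a group, then $\widehat H^a_x$ is a left group of degree $r$ over $H^P_x$; (iv) if $H^P_x$ is a group, then the set of idempotents of $\widehat H^a_x$ is a left zero band of size $r$.
   Context: $\operatorname{Reg}(S)$ is the set of regular elements of $S$. Green's relations $\mathscr K\in\{\mathscr L,\mathscr R,\mathscr H,\mathscr D,\mathscr J\}$ are taken in $S$, in $P$ (written $\mathscr K^P$, classes $K^P_x$) or in the monoid $aSa$ (written $\mathscr K^{aSa}$, classes $K^{aSa}_y$). For each $\mathscr K$, define the relation $\widehat{\mathscr K}^a$ on $P$ by $x\,\widehat{\mathscr K}^a\,y$ iff $(ax,ay)\in\mathscr K^{aSa}$; $\widehat K^a_x$ denotes the $\widehat{\mathscr K}^a$-class of $x$ in $P$. A left zero band is a semigroup $U$ with $uv=u$ for all $u,v\in U$; a left group of degree $r$ over a group $G$ is a semigroup isomorphic to $U\times G$ with $U$ a left zero band of cardinality $r$. *)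

(* Defs.v *)
Section Semigroups.
Context {T : Type} (mul : T -> T -> T).

Definition regular (x : T) : Prop := exists y, x = mul (mul x y) x.

Definition inSa (a x : T) : Prop := exists s, x = mul s a.
Definition inaSa (a x : T) : Prop := exists s, x = mul (mul a s) a.

(* Green's relations computed inside a subset A (used for A a subsemigroup):
   x K^A y requires x, y in A, and uses A^1 (adjoined identity). *)
Definition GL (A : T -> Prop) (x y : T) : Prop :=
  A x /\ A y /\
  (x = y \/ exists s, A s /\ x = mul s y) /\
  (y = x \/ exists s, A s /\ y = mul s x).
Definition GR (A : T -> Prop) (x y : T) : Prop :=
  A x /\ A y /\
  (x = y \/ exists s, A s /\ x = mul y s) /\
  (y = x \/ exists s, A s /\ y = mul x s).
Definition GH (A : T -> Prop) (x y : T) : Prop := GL A x y /\ GR A x y.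

Definition fullS : T -> Prop := fun _ => True.

Definition Pset (a : T) (x : T) : Prop := inSa a x /\ GL fullS x (mul a x).

Definition hatR (a x y : T) : Prop :=
  Pset a x /\ Pset a y /\ GR (inaSa a) (mul a x) (mul a y).
Definition hatH (a x y : T) : Prop :=
  Pset a x /\ Pset a y /\ GH (inaSa a) (mul a x) (mul a y).

Definition is_group (H : T -> Prop) : Prop :=
  (forall u v, H u -> H v -> H (mul u v)) /\
  exists e, H e /\ (forall u, H u -> mul e u = u /\ mul u e = u) /\
    (forall u, H u -> exists v, H v /\ mul u v = e /\ mul v u = e).

Definition isomorphic (H1 H2 : T -> Prop) : Prop :=
  exists f : T -> T,
    (forall u, H1 u -> H2 (f u)) /\
    (forall u v, H1 u -> H1 v -> f u = f v -> u = v) /\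
    (forall w, H2 w -> exists u, H1 u /\ f u = w) /\
    (forall u v, H1 u -> H1 v -> f (mul u v) = mul (f u) (f v)).

(* U indexes exactly the R^P-classes contained in hatR^a_x :
   g u is a representative of one such class, and every such class
   has exactly one representative. Thus |U| = r (also for infinite r). *)
Definition class_in_hatR (a x y : T) : Prop :=
  Pset a y /\ forall z, GR (Pset a) y z -> hatR a x z.
Definition indexes_R_classes (a x : T) (U : Type) (g : U -> T) : Prop :=
  (forall u, class_in_hatR a x (g u)) /\
  (forall u v, GR (Pset a) (g u) (g v) -> u = v) /\
  (forall y, class_in_hatR a x y -> exists u, GR (Pset a) (g u) y).

(* hatH^a_x is a left group of degree r over the group G := H^P_x :
   it is isomorphic to U x G with U a left zero band, |U| = r, where
   (u, g)(v, h) = (u, g h). *)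
Definition left_group_of_degree_r (a x : T) (Hhat G : T -> Prop) : Prop :=
  exists (U : Type) (g : U -> T), indexes_R_classes a x U g /\
  exists f : U -> T -> T,
    (forall u h, G h -> Hhat (f u h)) /\
    (forall u v h k, G h -> G k -> f u h = f v k -> u = v /\ h = k) /\
    (forall w, Hhat w -> exists u h, G h /\ f u h = w) /\
    (forall u v h k, G h -> G k -> mul (f u h) (f v k) = f u (mul h k)).

Definition idem_left_zero_band_size_r (a x : T) (Hhat : T -> Prop) : Prop :=
  let E := fun e => Hhat e /\ mul e e = e in
  (forall e f, E e -> E f -> mul e f = e) /\
  exists (U : Type) (g : U -> T), indexes_R_classes a x U g /\
  exists k : U -> T,
    (forall u, E (k u)) /\ (forall u v, k u = k v -> u = v) /\
    (forall e, E e -> exists u, k u = e).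

End Semigroups.

(* Main.v *)
Require Import Defs.
From Stdlib Require Import ProofIrrelevance Setoid.

Section Basics.
Variables (T : Type) (mul : T -> T -> T).
Hypothesis assoc : forall x y z, mul x (mul y z) = mul (mul x y) z.
Variable a : T.
Hypothesis idem_a : mul a a = a.
Hypothesis aSa_reg : forall y, inaSa mul a y -> regular mul y.

Local Notation "x · y" := (mul x y) (at level 40, left associativity).
Local Notation P := (Pset mul a).
Local Notation A := (inaSa mul a).

Definition LL x y := (exists s, x = s · y) /\ (exists s, y = s · x).
Definition RR x y := (exists s, x = y · s) /\ (exists s, y = x · s).

Lemma aa_r x : x · a · a = x · a.
Proof. rewrite <- assoc, idem_a. reflexivity. Qed.

Ltac norm := repeat rewrite assoc; repeat rewrite aa_r; repeat rewrite idem_a.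

Lemma P_xa x : P x -> x = x · a.
Proof. intros [[s Hs] _]. subst. norm. reflexivity. Qed.

Lemma P_tax x : P x -> exists t, x = t · (a · x).
Proof.
  intros [_ [_ [_ [H1 _]]]]. destruct H1 as [H1|[s [_ H1]]].
  - exists a. rewrite assoc, idem_a. exact H1.
  - exists s; exact H1.
Qed.

Lemma P_left x : P x -> exists s, x = s · x.
Proof. intros Hx. destruct (P_tax x Hx) as [t Ht]. exists (t · a).
  rewrite <- assoc. exact Ht. Qed.

Lemma A_xa w : A w -> w = w · a.
Proof. intros [s Hs]. subst. norm. reflexivity. Qed.

Lemma A_ax w : A w -> w = a · w.
Proof. intros [s Hs]. subst. norm. reflexivity. Qed.

Lemma A_P w : A w -> P w.
Proof.
  intros Hw. split.
  - destruct Hw as [s Hs]. exists (a · s). exact Hs.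
  - split; [exact I|]. split; [exact I|]. split.
    + left. apply A_ax; auto.
    + right. exists a. split; [exact I|reflexivity].
Qed.

Lemma ax_A x : P x -> A (a · x).
Proof. intros Hx. exists x. rewrite <- assoc, <- (P_xa x Hx). reflexivity. Qed.

Lemma P_ext x r : P x -> P (x · (r · a)).
Proof.
  intros Hx. destruct (P_tax x Hx) as [t Ht]. split.
  - exists (x · r). norm. reflexivity.
  - split; [exact I|]. split; [exact I|]. split.
    + right. exists t. split; [exact I|]. rewrite Ht at 1. norm. reflexivity.
    + right. exists a. split; [exact I|reflexivity].
Qed.

Lemma P_mul x y : P x -> P y -> P (x · y).
Proof. intros Hx Hy. destruct Hy as [[s Hs] _]. rewrite Hs. apply P_ext; auto. Qed.

Lemma A_mul u v : A u -> A v -> A (u · v).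
Proof. intros [s Hs] [t Ht]. subst. exists (s · a · a · t). norm. reflexivity. Qed.

Lemma phi_hom x y : P x -> a · (x · y) = a · x · (a · y).
Proof. intros Hx. rewrite (P_xa x Hx) at 1. norm. reflexivity. Qed.

Lemma P_reg x : P x -> exists x', P x' /\ x = x · x' · x.
Proof.
  intros Hx. destruct (aSa_reg (a · x) (ax_A x Hx)) as [z Hz].
  exists (a · z · a). split.
  - apply A_P. exists z. reflexivity.
  - destruct (P_tax x Hx) as [t Ht].
    assert (Ht' : t · a · x = x) by (rewrite <- assoc; auto).
    rewrite Ht at 1. rewrite Hz. norm. rewrite Ht'.
    rewrite <- (P_xa x Hx). reflexivity.
Qed.

Lemma A_reg w : A w -> exists w', A w' /\ w = w · w' · w.
Proof.
  intros Hw. destruct (aSa_reg w Hw) as [z Hz].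
  exists (a · z · a). split.
  - exists z. reflexivity.
  - norm. rewrite <- (A_xa w Hw).
    rewrite <- (assoc (w · z) a w), <- (A_ax w Hw). exact Hz.
Qed.

Lemma liftL (B : T -> Prop) (Bmul : forall x y, B x -> B y -> B (x · y))
  (Breg : forall x, B x -> exists x', B x' /\ x = x · x' · x) x y :
  B x -> B y -> LL x y -> GL mul B x y.
Proof.
  intros Bx By [[s Hs] [s' Hs']]. split; [auto|]. split; [auto|]. split.
  - right. destruct (Breg y By) as [y' [By' Hy']]. exists (x · y'). split.
    + apply Bmul; auto.
    + rewrite Hs at 1. rewrite Hy' at 1. norm. rewrite <- Hs. reflexivity.
  - right. destruct (Breg x Bx) as [x' [Bx' Hx']]. exists (y · x'). split.
    + apply Bmul; auto.
    + rewrite Hs' at 1. rewrite Hx' at 1. norm. rewrite <- Hs'. reflexivity.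
Qed.

Lemma liftR (B : T -> Prop) (Bmul : forall x y, B x -> B y -> B (x · y))
  (Breg : forall x, B x -> exists x', B x' /\ x = x · x' · x) x y :
  B x -> B y -> RR x y -> GR mul B x y.
Proof.
  intros Bx By [[s Hs] [s' Hs']]. split; [auto|]. split; [auto|]. split.
  - right. destruct (Breg y By) as [y' [By' Hy']]. exists (y' · x). split.
    + apply Bmul; auto.
    + rewrite Hs at 1. rewrite Hy' at 1. rewrite Hs. norm. reflexivity.
  - right. destruct (Breg x Bx) as [x' [Bx' Hx']]. exists (x' · y). split.
    + apply Bmul; auto.
    + rewrite Hs' at 1. rewrite Hx' at 1. rewrite Hs'. norm. reflexivity.
Qed.

Lemma lowerL (B : T -> Prop) (Bl : forall z, B z -> exists s, z = s · z) x y :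
  GL mul B x y -> LL x y.
Proof.
  intros [Bx [By [H1 H2]]]. split.
  - destruct H1 as [->|[s [_ Hs]]]; [apply Bl; auto | exists s; auto].
  - destruct H2 as [->|[s [_ Hs]]]; [apply Bl; auto | exists s; auto].
Qed.

Lemma lowerR (B : T -> Prop) (Br : forall z, B z -> exists s, z = z · s) x y :
  GR mul B x y -> RR x y.
Proof.
  intros [Bx [By [H1 H2]]]. split.
  - destruct H1 as [->|[s [_ Hs]]]; [apply Br; auto | exists s; auto].
  - destruct H2 as [->|[s [_ Hs]]]; [apply Br; auto | exists s; auto].
Qed.

Lemma P_r z : P z -> exists s, z = z · s.
Proof. intros H. exists a. apply P_xa; auto. Qed.
Lemma A_l z : A z -> exists s, z = s · z.
Proof. intros H. exists a. apply A_ax; auto. Qed.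
Lemma A_r z : A z -> exists s, z = z · s.
Proof. intros H. exists a. apply A_xa; auto. Qed.

Lemma LL_trans x y z : LL x y -> LL y z -> LL x z.
Proof. intros [[s1 H1] [s2 H2]] [[s3 H3] [s4 H4]]. split.
  - exists (s1 · s3). rewrite H1, H3. norm. reflexivity.
  - exists (s4 · s2). rewrite H4, H2. norm. reflexivity. Qed.
Lemma LL_sym x y : LL x y -> LL y x.
Proof. intros [H1 H2]; split; auto. Qed.
Lemma RR_trans x y z : RR x y -> RR y z -> RR x z.
Proof. intros [[s1 H1] [s2 H2]] [[s3 H3] [s4 H4]]. split.
  - exists (s3 · s1). rewrite H1, H3. norm. reflexivity.
  - exists (s2 · s4). rewrite H4, H2. norm. reflexivity. Qed.
Lemma RR_sym x y : RR x y -> RR y x.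
Proof. intros [H1 H2]; split; auto. Qed.
Lemma LL_refl x : P x -> LL x x.
Proof. intros H. destruct (P_left x H) as [s Hs]. split; exists s; auto. Qed.
Lemma RR_refl x : P x -> RR x x.
Proof. intros H. split; exists a; apply P_xa; auto. Qed.

Lemma LL_ax x : P x -> LL x (a · x).
Proof. intros Hx. destruct (P_tax x Hx) as [t Ht]. split; [exists t; auto | exists a; auto]. Qed.

Lemma RR_a x y : RR x y -> RR (a · x) (a · y).
Proof. intros [[s1 H1] [s2 H2]]. split; [exists s1; rewrite H1 at 1 | exists s2; rewrite H2 at 1]; norm; reflexivity. Qed.

Lemma LL_a x y : P x -> P y -> LL x y -> LL (a · x) (a · y).
Proof. intros Hx Hy H. apply LL_trans with x; [apply LL_sym, LL_ax; auto|].
  apply LL_trans with y; auto. apply LL_ax; auto. Qed.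

Lemma LL_of_a x y : P x -> P y -> LL (a · x) (a · y) -> LL x y.
Proof. intros Hx Hy H. apply LL_trans with (a · x); [apply LL_ax; auto|].
  apply LL_trans with (a · y); auto. apply LL_sym, LL_ax; auto. Qed.

Lemma cancel y r1 r2 : P y -> a · (y · r1) = a · (y · r2) -> y · r1 = y · r2.
Proof.
  intros Hy H. destruct (P_tax y Hy) as [t Ht].
  assert (E : forall r, y · r = t · (a · (y · r))).
  { intro r. rewrite Ht at 1. norm. reflexivity. }
  rewrite (E r1), (E r2), H. reflexivity.
Qed.

Lemma HP_to x y : GH mul P x y -> P y /\ LL x y /\ RR x y.
Proof. intros [HL HR]. split; [apply HL|]. split.
  - apply (lowerL P P_left); auto.
  - apply (lowerR P P_r); auto. Qed.

Lemma HP_of x y : P x -> P y -> LL x y -> RR x y -> GH mul P x y.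
Proof. intros. split; [apply liftL | apply liftR]; auto using P_mul, P_reg. Qed.

Lemma HA_to u w : GH mul A u w -> A w /\ LL u w /\ RR u w.
Proof. intros [HL HR]. split; [apply HL|]. split.
  - apply (lowerL A A_l); auto.
  - apply (lowerR A A_r); auto. Qed.

Lemma HA_of u w : A u -> A w -> LL u w -> RR u w -> GH mul A u w.
Proof. intros. split; [apply liftL | apply liftR]; auto using A_mul, A_reg. Qed.

Lemma i1 x y : P x -> GH mul P x y -> GH mul A (a · x) (a · y).
Proof.
  intros Hx H. destruct (HP_to x y H) as [Hy [HL HR]].
  apply HA_of; auto using ax_A, RR_a, LL_a.
Qed.

Lemma inj x y z : GH mul P x y -> GH mul P x z -> a · y = a · z -> y = z.
Proof.
  intros H1 H2 H. destruct (HP_to x y H1) as [Py [_ R1]].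
  destruct (HP_to x z H2) as [Pz [_ R2]].
  destruct (RR_trans _ _ _ (RR_sym _ _ R1) R2) as [_ [s Hs]].
  assert (E : y · a = y · s).
  { apply cancel; auto. rewrite <- (P_xa y Py), <- Hs. exact H. }
  rewrite (P_xa y Py) at 1. rewrite E. symmetry; exact Hs.
Qed.

Lemma liftH x w : P x -> P w -> (exists r, w = x · r) -> GH mul A (a · x) (a · w) ->
  GH mul P x w.
Proof.
  intros Hx Hw [r Hr] H. destruct (HA_to _ _ H) as [_ [HL [[q Hq] _]]].
  apply HP_of; auto.
  - apply LL_of_a; auto.
  - split; [|exists r; auto]. subst w. exists q.
    destruct (P_tax x Hx) as [t Ht].
    assert (Ht' : t · a · x = x) by (rewrite <- assoc; auto).
    rewrite Ht at 1. rewrite Hq. norm. rewrite Ht'. reflexivity.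
Qed.

Lemma surj x w : P x -> GH mul A (a · x) w -> exists y, GH mul P x y /\ a · y = w.
Proof.
  intros Hx H. destruct (HA_to _ _ H) as [Aw [_ [_ [u Hu]]]].
  assert (Hay : a · (x · (u · a)) = w).
  { rewrite (A_xa w Aw), Hu. norm. reflexivity. }
  exists (x · (u · a)). split; auto.
  apply liftH; auto using P_ext. exists (u · a); auto. rewrite Hay. exact H.
Qed.

Lemma grp_to x : P x -> is_group mul (GH mul P x) -> is_group mul (GH mul A (a · x)).
Proof.
  intros Hx [Gcl [e [He [Hid Hinv]]]]. split.
  - intros u v Hu Hv. destruct (surj x u Hx Hu) as [y [Hy <-]].
    destruct (surj x v Hx Hv) as [z [Hz <-]].
    rewrite <- phi_hom by (apply (HP_to x y Hy)). apply i1; auto.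
  - exists (a · e). split; [apply i1; auto|]. split.
    + intros u Hu. destruct (surj x u Hx Hu) as [y [Hy <-]].
      destruct (Hid y Hy) as [E1 E2].
      rewrite <- !phi_hom by (apply HP_to with x; auto). rewrite E1, E2. auto.
    + intros u Hu. destruct (surj x u Hx Hu) as [y [Hy <-]].
      destruct (Hinv y Hy) as [v [Hv [E1 E2]]]. exists (a · v).
      split; [apply i1; auto|].
      rewrite <- !phi_hom by (apply HP_to with x; auto). rewrite E1, E2. auto.
Qed.

Lemma grp_of x : P x -> is_group mul (GH mul A (a · x)) -> is_group mul (GH mul P x).
Proof.
  intros Hx [Gcl [f [Hf [Hid Hinv]]]].
  assert (Cl : forall y z, GH mul P x y -> GH mul P x z -> GH mul P x (y · z)).
  { intros y z Hy Hz. destruct (HP_to x y Hy) as [Py [_ [_ [r Hr]]]].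
    destruct (HP_to x z Hz) as [Pz _].
    apply liftH; auto using P_mul.
    - exists (r · z). rewrite Hr. norm. reflexivity.
    - rewrite phi_hom by auto. apply Gcl; apply i1; auto. }
  split; auto.
  destruct (surj x f Hx Hf) as [e [He Hae]].
  exists e. split; auto. split.
  - intros u Hu. destruct (HP_to x u Hu) as [Pu _]. destruct (HP_to x e He) as [Pe _].
    split.
    + apply (inj x); auto. rewrite phi_hom by auto. rewrite Hae. apply Hid. apply i1; auto.
    + apply (inj x); auto. rewrite phi_hom by auto. rewrite Hae. apply Hid. apply i1; auto.
  - intros u Hu. destruct (HP_to x u Hu) as [Pu _]. destruct (HP_to x e He) as [Pe _].
    destruct (Hinv (a · u) (i1 x u Hx Hu)) as [w [Hw [E1 E2]]].
    destruct (surj x w Hx Hw) as [v [Hv <-]]. destruct (HP_to x v Hv) as [Pv _].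
    exists v. split; auto. split.
    + apply (inj x); auto. rewrite phi_hom by auto. rewrite Hae. auto.
    + apply (inj x); auto. rewrite phi_hom by auto. rewrite Hae. auto.
Qed.

Lemma iso x : P x -> isomorphic mul (GH mul P x) (GH mul A (a · x)).
Proof.
  intros Hx. exists (mul a). split; [|split; [|split]].
  - intros u Hu. apply i1; auto.
  - intros u v Hu Hv H. apply (inj x); auto.
  - intros w Hw. apply surj; auto.
  - intros u v Hu Hv. apply phi_hom. apply (HP_to x u Hu).
Qed.

Lemma idem_right f u : f · f = f -> (exists s, u = s · f) -> u · f = u.
Proof. intros Hf [s Hs]. rewrite Hs. rewrite <- assoc, Hf. reflexivity. Qed.
Lemma idem_left f u : f · f = f -> (exists s, u = f · s) -> f · u = u.
Proof. intros Hf [s Hs]. rewrite Hs. rewrite assoc, Hf. reflexivity. Qed.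
Lemma idem_eq e f : e · e = e -> f · f = f -> LL e f -> RR e f -> e = f.
Proof. intros He Hf [H1 _] [_ H2].
  rewrite <- (idem_right f e Hf H1). apply idem_left; auto. Qed.

Section Grp.
Variables x e0 : T.
Hypothesis Hx : P x.
Hypothesis He0 : GH mul P x e0.
Hypothesis Hid : forall u, GH mul P x u -> e0 · u = u /\ u · e0 = u.
Hypothesis Hinv : forall u, GH mul P x u -> exists v, GH mul P x v /\ u · v = e0 /\ v · u = e0.

Definition E e := hatH mul a x e /\ e · e = e.

Lemma e0e0 : e0 · e0 = e0.
Proof. apply Hid; auto. Qed.

Lemma hat_to y : hatH mul a x y -> P y /\ LL x y /\ RR (a · x) (a · y).
Proof. intros [_ [Py H]]. destruct (HA_to _ _ H) as [_ [HL HR]].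
  split; auto. split; auto. apply LL_of_a; auto. Qed.

Lemma hat_of y : P y -> LL x y -> RR (a · x) (a · y) -> hatH mul a x y.
Proof. intros Py HL HR. split; auto. split; auto.
  apply HA_of; auto using ax_A, LL_a. Qed.

Lemma E_LL0 e : E e -> LL e e0.
Proof. intros [H _]. destruct (hat_to e H) as [_ [HL _]].
  destruct (HP_to x e0 He0) as [_ [HL0 _]]. apply LL_trans with x; auto.
  apply LL_sym; auto. Qed.

Lemma e_e0 e : E e -> e · e0 = e.
Proof. intros He. apply idem_right. apply e0e0. apply (E_LL0 e He). Qed.
Lemma e0_e e : E e -> e0 · e = e0.
Proof. intros He. apply idem_right. apply (proj2 He). apply (E_LL0 e He). Qed.

Lemma R_eh e h : E e -> GH mul P x h -> RR e (e · h).
Proof. intros He Hh. destruct (Hinv h Hh) as [h' [_ [E1 _]]]. split.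
  - exists h'. rewrite <- assoc, E1. symmetry. apply e_e0; auto.
  - exists h. reflexivity. Qed.

Lemma HH1 e h : E e -> GH mul P x h -> hatH mul a x (e · h).
Proof.
  intros He Hh. destruct (HP_to x h Hh) as [Ph [HLh _]].
  destruct He as [Hhe Hee]. destruct (hat_to e Hhe) as [Pe [HLe HRe]].
  apply hat_of; auto using P_mul.
  - apply LL_trans with h; auto. split.
    + exists e0. rewrite assoc, e0_e by (split; auto). symmetry. apply Hid; auto.
    + exists e. reflexivity.
  - apply RR_trans with (a · e); auto. apply RR_a. apply R_eh; auto. split; auto.
Qed.

Lemma HH2 e1 e2 h k : E e1 -> E e2 -> GH mul P x h -> GH mul P x k ->
  e1 · h = e2 · k -> e1 = e2 /\ h = k.
Proof.
  intros H1 H2 Hh Hk Heq.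
  assert (Ee : e1 = e2).
  { apply idem_eq; try apply H1; try apply H2.
    - apply LL_trans with e0; [apply E_LL0 | apply LL_sym, E_LL0]; auto.
    - apply RR_trans with (e1 · h); [apply R_eh; auto|].
      rewrite Heq. apply RR_sym, R_eh; auto. }
  subst e2. split; auto.
  rewrite <- (proj1 (Hid h Hh)), <- (proj1 (Hid k Hk)).
  rewrite <- (e0_e e1 H1). rewrite <- !assoc, Heq. reflexivity.
Qed.

Lemma idem_exists y : P y -> RR (a · x) (a · y) -> exists e, E e /\ RR e y.
Proof.
  intros Py [[q Hq] [q' Hq']].
  remember (y · (q · a)) as z eqn:Hz.
  assert (Pz : P z) by (subst z; apply P_ext; auto).
  assert (az : a · z = a · x).
  { subst z. transitivity (a · y · q · a). norm; reflexivity.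
    rewrite <- Hq. rewrite <- assoc, <- (P_xa x Hx). reflexivity. }
  destruct (Hinv x (HP_of x x Hx Hx (LL_refl x Hx) (RR_refl x Hx))) as [h0 [Hh0 [Hxh0 Hh0x]]].
  destruct (HP_to x h0 Hh0) as [Ph0 _].
  assert (h0z : h0 · z = e0).
  { rewrite <- Hh0x. apply cancel; auto. rewrite !phi_hom by auto. rewrite az. reflexivity. }
  assert (ze0 : z · e0 = z).
  { assert (HLzx : LL z x).
    { apply LL_trans with (a · z); [apply LL_ax; auto|]. rewrite az. apply LL_sym, LL_ax; auto. }
    destruct HLzx as [[s Hs] _]. rewrite Hs. rewrite <- assoc.
    rewrite (proj2 (Hid x (HP_of x x Hx Hx (LL_refl x Hx) (RR_refl x Hx)))). reflexivity. }
  assert (ae : a · (z · h0) = a · e0).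
  { rewrite phi_hom by auto. rewrite az, <- phi_hom by auto. rewrite Hxh0. reflexivity. }
  exists (z · h0). split; [split|].
  - destruct (HP_to x e0 He0) as [Pe0 [HL0 HR0]].
    apply hat_of; auto using P_mul.
    + apply LL_of_a; auto using P_mul. rewrite ae. apply LL_a; auto.
    + rewrite ae. apply RR_a; auto.
  - rewrite (assoc (z · h0) z h0), <- (assoc z h0 z), h0z, ze0. reflexivity.
  - assert (yz : y = z · q').
    { rewrite (P_xa y Py) at 1. rewrite Hz. rewrite <- (assoc y (q · a) q').
      apply cancel; auto. rewrite <- (P_xa y Py). rewrite (assoc y (q · a) q').
      rewrite <- Hz. rewrite assoc, az. exact Hq'. }
    split.
    + exists (q · a · h0). rewrite Hz. norm. reflexivity.
    + exists (x · q'). rewrite (assoc (z · h0) x q'), <- (assoc z h0 x), Hh0x, ze0. exact yz.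
Qed.

Lemma HH3 w : hatH mul a x w -> exists e h, E e /\ GH mul P x h /\ e · h = w.
Proof.
  intros Hw. destruct (hat_to w Hw) as [Pw [HLw HRw]].
  destruct (idem_exists w Pw HRw) as [e [He HRe]].
  destruct (HP_to x e0 He0) as [Pe0 [HL0 HR0]].
  destruct He as [Hhe Hee]. destruct (hat_to e Hhe) as [Pe _].
  assert (ew : e · w = w) by (apply idem_left; auto; apply HRe).
  exists e, (e0 · w). split; [split; auto|]. split.
  - apply HP_of; auto using P_mul.
    + apply LL_trans with w; auto. split.
      * exists e. rewrite assoc, e_e0 by (split; auto). auto.
      * exists e0. reflexivity.
    + apply RR_trans with e0; auto. split.
      * destruct HRe as [[q Hq] _]. exists q.
        rewrite <- assoc, <- Hq. symmetry. apply e0_e. split; auto.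
      * exists w. reflexivity.
  - rewrite assoc, e_e0 by (split; auto). auto.
Qed.

Lemma idx : indexes_R_classes mul a x {e | E e} (@proj1_sig _ _).
Proof.
  split; [|split].
  - intros [e He]; simpl. split; [apply (hat_to e (proj1 He))|].
    intros z Hz. destruct (hat_to e (proj1 He)) as [Pe [_ HRe]].
    assert (Rez : RR e z) by (apply (lowerR P P_r); auto).
    assert (Pz : P z) by apply Hz.
    split; auto. split; auto.
    apply liftR; auto using A_mul, A_reg, ax_A.
    apply RR_trans with (a · e); auto. apply RR_a; auto.
  - intros [e1 H1] [e2 H2]; simpl. intros HR.
    assert (e1 = e2).
    { apply idem_eq; try apply H1; try apply H2.
      - apply LL_trans with e0; [apply E_LL0 | apply LL_sym, E_LL0]; auto.
      - apply (lowerR P P_r); auto. }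
    subst e2. f_equal. apply proof_irrelevance.
  - intros y [Py Hc].
    assert (Hy : hatR mul a x y).
    { apply Hc. apply liftR; auto using P_mul, P_reg. apply RR_refl; auto. }
    destruct Hy as [_ [_ HR]].
    destruct (idem_exists y Py (lowerR A A_r _ _ HR)) as [e [He HRe]].
    exists (exist _ e He). simpl. apply liftR; auto using P_mul, P_reg.
    apply (hat_to e (proj1 He)).
Qed.

Lemma part3 : left_group_of_degree_r mul a x (fun y => hatH mul a x y) (GH mul P x).
Proof.
  exists {e | E e}, (@proj1_sig _ _). split; [apply idx|].
  exists (fun u h => proj1_sig u · h). split; [|split; [|split]].
  - intros [e He] h Hh; simpl. apply HH1; auto.
  - intros [e1 H1] [e2 H2] h k Hh Hk Heq; simpl in Heq.
    destruct (HH2 e1 e2 h k H1 H2 Hh Hk Heq) as [-> ->]. split; auto.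
    f_equal. apply proof_irrelevance.
  - intros w Hw. destruct (HH3 w Hw) as [e [h [He [Hh <-]]]].
    exists (exist _ e He), h. split; auto.
  - intros [e1 H1] [e2 H2] h k Hh Hk; simpl.
    assert (he2 : h · e2 = h).
    { apply idem_right; [apply H2|].
      destruct (HP_to x h Hh) as [_ [HLh _]].
      destruct (hat_to e2 (proj1 H2)) as [_ [HL2 _]].
      apply (LL_trans h x e2); [apply LL_sym|]; auto. }
    rewrite (assoc (e1 · h) e2 k), <- (assoc e1 h e2), he2, assoc. reflexivity.
Qed.

Lemma part4 : idem_left_zero_band_size_r mul a x (fun y => hatH mul a x y).
Proof.
  split.
  - intros e f He Hf. apply idem_right; [apply Hf|].
    apply (LL_trans e e0 f); [apply E_LL0 | apply LL_sym, E_LL0]; auto.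
  - exists {e | E e}, (@proj1_sig _ _). split; [apply idx|].
    exists (@proj1_sig _ _). split; [|split].
    + intros [e He]; exact He.
    + intros [e1 H1] [e2 H2]; simpl; intros ->. f_equal. apply proof_irrelevance.
    + intros e He. exists (exist _ e He). reflexivity.
Qed.

End Grp.
End Basics.

Theorem theorem3p21 (T : Type) (mul : T -> T -> T)
  (assoc : forall x y z, mul x (mul y z) = mul (mul x y) z)
  (a : T) (idem_a : mul a a = a)
  (aSa_reg : forall y, inaSa mul a y -> regular mul y)
  (x : T) (Px : Pset mul a x) :
  let P := Pset mul a in
  let HPx := fun y => GH mul P x y in
  let HaSa := fun z => GH mul (inaSa mul a) (mul a x) z in
  let Hhat := fun y => hatH mul a x y in
  (* (i) phi : y |-> a y restricts to a bijection H^P_x -> H^{aSa}_{ax} *)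
  ((forall y, HPx y -> HaSa (mul a y)) /\
   (forall y z, HPx y -> HPx z -> mul a y = mul a z -> y = z) /\
   (forall w, HaSa w -> exists y, HPx y /\ mul a y = w)) /\
  (* (ii) *)
  ((is_group mul HPx <-> is_group mul HaSa) /\
   (is_group mul HPx -> isomorphic mul HPx HaSa)) /\
  (* (iii) *)
  (is_group mul HPx -> left_group_of_degree_r mul a x Hhat HPx) /\
  (* (iv) *)
  (is_group mul HPx -> idem_left_zero_band_size_r mul a x Hhat).
Proof.
  cbv zeta. split; [split; [|split]|split; [split; [split|]|split]].
  - intros y Hy. apply i1; auto.
  - intros y z Hy Hz H. eapply inj; eauto.
  - intros w Hw. apply surj; auto.
  - apply grp_to; auto.
  - apply grp_of; auto.
  - intros _. apply iso; auto.
  - intros [_ [e0 [He0 [Hid Hinv]]]]. eapply part3; eauto.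
  - intros [_ [e0 [He0 [Hid Hinv]]]]. eapply part4; eauto.
Qed.
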